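(* Let $\mathcal{S}$ and $\mathcal{S}'$ be square-free stratified staged trees, each of whose stages consist of situations at a single level, which are statistically equivalent via a bijection $\varphi:\Lambda(\mathcal{S})\to\Lambda(\mathcal{S}')$. Let $\alpha>0$, let $\mathcal{D}=(N_\lambda)_{\lambda\in\Lambda(\mathcal{S})}$ be a complete data sample on $\mathcal{S}$ and $\mathcal{D}'$ the sample on $\mathcal{S}'$ with $N'_{\varphi(\lambda)}=N_\lambda$. Then $\mathrm{CS\text{-}BDeu}(\mathcal{S},\mathcal{D};\alpha)=\mathrm{CS\text{-}BDeu}(\mathcal{S}',\mathcal{D}';\alpha)$.
   Context: An event tree is a finite directed rooted tree with edges directed away from the root; leaves have no outgoing edges, other nodes are situations; the level of a node is its distance from the root. A staged tree is an event tree with a partition of its situations into stages, situations in a common stage having the same number of outgoing edges, labelled consistently, with the $k$-th edges sharing a transition probability; its model is the set of distributions on the set $\Lambda(\mathcal{S})$ of root-to-leaf paths obtained by choosing a positive probability vector for each stage and multiplying edge probabilities along paths. Square-free: no two situations on one root-to-leaf path lie in the same stage. $\mathcal{S},\mathcal{S}'$ are statistically equivalent via a bijection $\varphi$ if the model of $\mathcal{S}$ equals $\{p\circ\varphi: p$ in the model of $\mathcal{S}'\}$. For variables $X_1,\dots,X_n$ with finite state spaces $\mathbb{X}_i$, an event tree is $\mathcal{X}$-compatible if its nodes are the root together with one node $v(x_1,\dots,x_k)$ for each $(x_1,\dots,x_k)\in\mathbb{X}_1\times\dots\times\mathbb{X}_k$, $1\le k\le n$, with edges from $v(x_1,\dots,x_{k-1})$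 to $v(x_1,\dots,x_k)$; a staged tree is stratified if its event tree is $\mathcal{X}$-compatible for some $\mathcal{X}$. Data: a complete sample assigns counts $N_\lambda$ to paths; $n_{jk}$ is the number of units passing through the $k$-th edge of some situation in stage $u_j$, $\overline n_j=\sum_k n_{jk}$. The BD-metric with hyperparameters $\alpha_{jk}$, $\overline\alpha_j=\sum_k\alpha_{jk}$, is $\prod_j\big[\Gamma(\overline\alpha_j)/\Gamma(\overline\alpha_j+\overline n_j)\prod_k\Gamma(\alpha_{jk}+n_{jk})/\Gamma(\alpha_{jk})\big]$. CS-BDeu: hyperparameters are propagated forward from the root. The root stage has $\dot\alpha=\alpha$. For a stage $u_{ij}$ at level $i-1$ with $h_{ij}$ situations and $r_{ij}$ outgoing edges per situation, $\dot\alpha_{ij}$ is the sum of the (individual) hyperparameters of the edges entering its situations, the stage edge hyperparameters are $\alpha_{ijk}=\dot\alpha_{ij}/r_{ij}$, and each individual edge emanating from a situation of $u_{ij}$ along label $k$ receives hyperparameter $\alpha_{ijk}/h_{ij}$. The CS-BDeu score is the BD-metric with stage hyperparameters $\alpha_{ijk}$. *)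

(* Defs.v *)
From mathcomp Require Import all_boot all_order all_algebra.
From mathcomp Require Import reals.
Set Implicit Arguments. Unset Strict Implicit. Unset Printing Implicit Defensive.
Import Order.TTheory GRing.Theory Num.Theory.
Local Open Scope ring_scope.

(* Variables X_1..X_n have state spaces of sizes d = [:: d_1; ...; d_n]
   (state space of X_{i+1} is identified with 'I_(nth 0 d i)).
   A node at level k is the sequence of its first k coordinates (x_1..x_k).
   - st v : the stage of situation v is the pair (size v, st v); thus stages
     are exactly the classes of a partition of the situations, each class
     lying in one level.
   - lab v : the labelling of the outgoing edges of situation v: the edge
     from v to v ++ [:: x] carries label  lab v x  in [0, d_{k+1}).     *)
Record sstree := SStree {
  sdeg : seq nat;
  sstage : seq nat -> nat;
  slab : seq nat -> nat -> nat }.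

Definition nlev (T : sstree) : nat := size (sdeg T).
Definition dk (T : sstree) (k : nat) : nat := nth 0%N (sdeg T) k.

Definition paths (T : sstree) : finType :=
  {dffun forall i : 'I_(nlev T), 'I_(dk T i)}.

Definition pth (T : sstree) (l : paths T) : seq nat :=
  [seq nat_of_ord (l i) | i <- enum 'I_(nlev T)].

Definition prefix (T : sstree) (k : nat) (l : paths T) : seq nat :=
  take k (pth l).

(* the value x_{k+1} taken by path l at level k (the edge leaving level k) *)
Definition coord (T : sstree) (k : nat) (l : paths T) : nat := nth 0%N (pth l) k.

Definition elab (T : sstree) (k : nat) (l : paths T) : nat :=
  slab T (prefix k l) (coord k l).

Definition wf_sstree (T : sstree) : Prop :=
  (forall k, (k < nlev T)%N -> (0 < dk T k)%N) /\
  (forall (l : paths T) k, (k < nlev T)%N ->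
     (forall x, (x < dk T k)%N -> (slab T (prefix k l) x < dk T k)%N) /\
     {in [pred x | (x < dk T k)%N] &, injective (slab T (prefix k l))}).

Definition nodes (T : sstree) (k : nat) : seq (seq nat) :=
  undup [seq prefix k l | l <- enum (paths T)].

Definition stages (T : sstree) (k : nat) : seq nat :=
  undup [seq sstage T v | v <- nodes T k].

Definition hcount (T : sstree) (k s : nat) : nat :=
  count (fun v => sstage T v == s) (nodes T k).

Definition model (R : realType) (T : sstree) (p : paths T -> R) : Prop :=
  exists theta : nat -> nat -> nat -> R,
    (forall k s, (k < nlev T)%N ->
       (forall j, (j < dk T k)%N -> 0 < theta k s j) /\
       \sum_(j < dk T k) theta k s j = 1) /\
    forall l : paths T,
      p l = \prod_(i < nlev T) theta i (sstage T (prefix i l)) (elab i l).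

Definition stat_equiv (R : realType) (T T' : sstree)
    (phi : paths T -> paths T') : Prop :=
  bijective phi /\
  forall p : paths T -> R,
    model p <-> exists p' : paths T' -> R, model p' /\ forall l, p l = p' (phi l).

(* gratio a m = Gamma(a + m) / Gamma(a) for a natural number m (rising factorial) *)
Definition gratio (R : realType) (a : R) (m : nat) : R := \prod_(i < m) (a + i%:R).

(* propagated stage hyperparameter  \dot alpha  of stage (k, s) *)
Fixpoint adot (R : realType) (T : sstree) (alpha : R) (k s : nat) : R :=
  match k with
  | 0 => alpha
  | k'.+1 =>
      \sum_(v <- nodes T k'.+1 | sstage T v == s)
        (* individual hyperparameter of the edge entering v from its parent w *)
        let w := take k' v in
        adot T alpha k' (sstage T w) / (dk T k')%:R
          / (hcount T k' (sstage T w))%:R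
  end.

Definition aedge (R : realType) (T : sstree) (alpha : R) (k s j : nat) : R :=
  adot T alpha k s / (dk T k)%:R.

Definition ncount (T : sstree) (N : paths T -> nat) (k s j : nat) : nat :=
  \sum_(l : paths T | (sstage T (prefix k l) == s) && (elab k l == j)) N l.

Definition CS_BDeu (R : realType) (T : sstree) (N : paths T -> nat) (alpha : R) : R :=
  \prod_(k < nlev T) \prod_(s <- stages T k)
    (let abar := \sum_(j < dk T k) aedge T alpha k s j in
     let nbar := (\sum_(j < dk T k) ncount N k s j)%N in
     (gratio abar nbar)^-1 *
     \prod_(j < dk T k) gratio (aedge T alpha k s j) (ncount N k s j)).

(* Main.v *)
Require Import Defs.
From mathcomp Require Import all_boot all_order all_algebra.
From mathcomp Require Import reals exp.
From mathcomp Require Import zify ring lra.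
Set Implicit Arguments. Unset Strict Implicit. Unset Printing Implicit Defensive.
Import Order.TTheory GRing.Theory Num.Theory.
Local Open Scope ring_scope.

Section Basic.
Variable T : sstree.

Lemma size_pth (l : paths T) : size (pth l) = nlev T.
Proof. by rewrite /pth size_map size_enum_ord. Qed.

Lemma nth_pth (l : paths T) (i : 'I_(nlev T)) : nth 0%N (pth l) i = l i.
Proof. by rewrite /pth (nth_map i) ?size_enum_ord // nth_ord_enum. Qed.

Lemma prefix_eqP (k : nat) (l l0 : paths T) :
  (Defs.prefix k l == Defs.prefix k l0) =
  [forall i : 'I_(nlev T), (i < k)%N ==> (l i == l0 i :> nat)].
Proof.
apply/eqP/forallP => [H i|H].
  apply/implyP => ik.
  have := congr1 (fun s => nth 0%N s i) H.
  by rewrite /Defs.prefix !nth_take // !nth_pth => ->.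
apply: (@eq_from_nth _ 0%N); first by rewrite /Defs.prefix !size_take !size_pth.
move=> i; rewrite /Defs.prefix size_take size_pth => hi.
have [hik hin] : (i < k)%N /\ (i < nlev T)%N.
  by move: hi; case: (ltnP k (nlev T)) => h hi; split; lia.
rewrite !nth_take //.
have := H (Ordinal hin); rewrite /= hik /= => /eqP.
by rewrite -(nth_pth l (Ordinal hin)) -(nth_pth l0 (Ordinal hin)).
Qed.

Lemma coordE k (hk : (k < nlev T)%N) (l : paths T) : Defs.coord k l = l (Ordinal hk).
Proof. by rewrite /Defs.coord -(nth_pth l (Ordinal hk)). Qed.

Definition Pc (m : nat) : nat :=
  \prod_(i < nlev T) (if (m <= i)%N then dk T i else 1%N).

Lemma card_prefix k (l0 : paths T) :
  #|[pred l : paths T | Defs.prefix k l == Defs.prefix k l0]| = Pc k.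
Proof.
pose F := fun i : 'I_(nlev T) =>
  if (i < k)%N then (pred1 (l0 i) : pred 'I_(dk T i)) else (predT : pred 'I_(dk T i)).
have -> : #|[pred l : paths T | Defs.prefix k l == Defs.prefix k l0]| = #|(family F : simpl_pred (paths T))|.
  apply: eq_card => l.
  rewrite !inE prefix_eqP; apply/forallP/familyP => H i;
  have := H i; rewrite /F; case: ifP => //= _.
rewrite card_family foldrE big_map big_enum /Pc; apply: eq_bigr => i _.
rewrite /F; case: ltnP => _; first by rewrite card1.
by rewrite cardT size_enum_ord.
Qed.

Lemma card_prefix_coord k (hk : (k < nlev T)%N) (l0 : paths T) x (hx : (x < dk T k)%N) :
  #|[pred l : paths T | (Defs.prefix k l == Defs.prefix k l0) && (Defs.coord k l == x)]|
  = Pc k.+1.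
Proof.
pose F := fun i : 'I_(nlev T) =>
  if (i < k)%N then (pred1 (l0 i) : pred 'I_(dk T i))
  else if (i == k :> nat) then ((fun y : 'I_(dk T i) => val y == x) : pred 'I_(dk T i))
  else (predT : pred 'I_(dk T i)).
have -> : #|[pred l : paths T | (Defs.prefix k l == Defs.prefix k l0) && (Defs.coord k l == x)]|
   = #|(family F : simpl_pred (paths T))|.
  apply: eq_card => l.
  rewrite !inE prefix_eqP coordE; apply/andP/familyP => [[/forallP H1 H2] i|H].
    have := H1 i; rewrite /F; case: ltnP => ik /=.
      by move=> h; rewrite unfold_in /= -val_eqE.
    case: eqP => [iE|] //= _.
    by rewrite unfold_in /=; have -> : i = Ordinal hk by apply: val_inj.
  split.
    apply/forallP => i; apply/implyP => ik; have := H i; rewrite /F ik unfold_in /=.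
    by move/eqP ->.
  by have := H (Ordinal hk); rewrite /F /= ltnn eqxx unfold_in.
rewrite card_family foldrE big_map big_enum /Pc; apply: eq_bigr => i _.
rewrite /F; case: ltnP => ik; first by rewrite card1; case: leqP => //; lia.
case: eqP => iE.
  have hx' : (x < dk T i)%N by rewrite iE.
  rewrite (@eq_card _ _ (pred1 (Ordinal hx'))) ?card1; last first.
    by move=> y; rewrite !inE -val_eqE.
  by rewrite iE ltnn.
have -> : (k < i)%N by rewrite ltn_neqAle ik andbT; apply/eqP => E; apply: iE.
by rewrite cardT size_enum_ord.
Qed.

Lemma Pc_rec k (hk : (k < nlev T)%N) : Pc k = (dk T k * Pc k.+1)%N.
Proof.
rewrite /Pc (bigD1 (Ordinal hk)) //= [in RHS](bigD1 (Ordinal hk)) //= leqnn ltnn mul1n.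
congr (_ * _)%N; apply: eq_bigr => i /eqP iE.
have iE' : (val i != k) by apply/eqP => E; apply: iE; apply: val_inj.
by rewrite leq_eqVlt eq_sym (negbTE iE').
Qed.

Lemma Pc_gt0 (hd : forall k, (k < nlev T)%N -> (0 < dk T k)%N) m : (0 < Pc m)%N.
Proof. rewrite /Pc prodn_gt0 // => i; case: ifP => //= _; exact: hd. Qed.

Lemma card_paths : #|paths T| = Pc 0.
Proof.
rewrite card_dep_ffun foldrE big_map big_enum /Pc; apply: eq_bigr => i _.
by rewrite card_ord.
Qed.

End Basic.

Section Part2.
Variable R : realType.
Variable T : sstree.
Variable hwf : wf_sstree T.

Local Notation st k l := (sstage T (Defs.prefix k l)).

Lemma mem_nodes k (l : paths T) : Defs.prefix k l \in nodes T k.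
Proof. by rewrite /nodes mem_undup; apply: map_f; rewrite mem_enum. Qed.

Lemma nodesP k v : v \in nodes T k -> exists l : paths T, v = Defs.prefix k l.
Proof. by rewrite /nodes mem_undup => /mapP [l _ ->]; exists l. Qed.

Lemma mem_stages k (l : paths T) : st k l \in stages T k.
Proof. by rewrite /stages mem_undup; apply: map_f; apply: mem_nodes. Qed.

Lemma stagesP k s : s \in stages T k -> exists l : paths T, s = st k l.
Proof. by rewrite /stages mem_undup => /mapP [v /nodesP [l ->] ->]; exists l. Qed.

Lemma hcount_gt0 k s : s \in stages T k -> (0 < hcount T k s)%N.
Proof.
move=> /stagesP [l ->]; rewrite /hcount -has_count; apply/hasP.
by exists (Defs.prefix k l); rewrite ?mem_nodes.
Qed.

Lemma paths_gt0 : (0 < #|paths T|)%N.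
Proof. by rewrite card_paths Pc_gt0 //; case: hwf. Qed.

Lemma sum_seq_pred1 (I : eqType) (r : seq I) a (G : I -> R) :
  uniq r -> a \in r -> \sum_(v <- r | v == a) G v = G a.
Proof.
move=> u ar; rewrite big_mkcond (bigD1_seq a) //= eqxx big1 ?addr0 //.
by move=> i /negbTE ->.
Qed.

Lemma sum_const_seq (I : eqType) (r : seq I) (P : pred I) (x : R) :
  \sum_(v <- r | P v) x = (count P r)%:R * x.
Proof.
elim: r => [|a r IH]; first by rewrite big_nil mul0r.
rewrite big_cons IH /=; case: (P a) => //=.
by rewrite natrD mulrDl mul1r.
Qed.

Lemma sum1_card (P : pred (paths T)) : \sum_(l | P l) (1 : R) = #|[pred l | P l]|%:R.
Proof. by rewrite sumr_const. Qed.

Lemma sum_prefix k (Q : pred (seq nat)) (F : paths T -> R) :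
  \sum_(l | Q (Defs.prefix k l)) F l =
  \sum_(v <- nodes T k | Q v) \sum_(l | Defs.prefix k l == v) F l.
Proof.
rewrite [RHS](eq_bigr (fun v => \sum_l (if Defs.prefix k l == v then F l else 0))); last first.
  by move=> v _; rewrite big_mkcond.
rewrite exchange_big big_mkcond /=; apply: eq_bigr => l _.
rewrite -big_mkcondr.
case: ifP => Ql.
  rewrite (eq_bigl (fun v => v == Defs.prefix k l)).
    by rewrite sum_seq_pred1 ?undup_uniq ?mem_nodes.
  by move=> v /=; rewrite [_ == v]eq_sym; case: eqP => [->|]; rewrite ?Ql ?andbF ?andbT.
rewrite big1 // => v /andP [Qv /eqP E]; by rewrite E Qv in Ql.
Qed.

Lemma elab_lt k (hk : (k < nlev T)%N) (l : paths T) : (elab k l < dk T k)%N.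
Proof.
have [_ H] := hwf; have [H1 _] := H l k hk.
by apply: H1; rewrite coordE ltn_ord.
Qed.

Definition Cs (c : paths T -> R) k s j :=
  \sum_(l | (st k l == s) && (elab k l == j)) c l.

Lemma sum_stage_label k (hk : (k < nlev T)%N) (c : paths T -> R) (g : nat -> nat -> R) :
  \sum_l c l * g (st k l) (elab k l) =
  \sum_(s <- stages T k) \sum_(j < dk T k) Cs c k s j * g s j.
Proof.
rewrite [RHS](eq_bigr (fun s => \sum_(j < dk T k) \sum_l
   (if (st k l == s) && (elab k l == j) then c l * g (st k l) (elab k l) else 0))); last first.
  move=> s _; apply: eq_bigr => j _; rewrite /Cs big_distrl /= big_mkcond /=.
  apply: eq_bigr => l _; case: ifP => // /andP [/eqP -> /eqP ->] //.
rewrite [RHS](eq_bigr (fun s => \sum_l \sum_(j < dk T k)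
   (if (st k l == s) && (elab k l == j) then c l * g (st k l) (elab k l) else 0))); last first.
  by move=> s _; rewrite exchange_big.
rewrite exchange_big /=; apply: eq_bigr => l _.
have inner : forall s, \sum_(j < dk T k)
    (if (st k l == s) && (elab k l == j) then c l * g (st k l) (elab k l) else 0)
    = (if st k l == s then c l * g (st k l) (elab k l) else 0).
  move=> s; case: eqP => _ /=; last by rewrite big1.
  rewrite -big_mkcond /= (big_pred1 (Ordinal (elab_lt hk l))) //.
under eq_bigr => s _ do rewrite inner.
rewrite -big_mkcond /=.
rewrite (eq_bigl (fun s => s == st k l)); last by move=> s; rewrite eq_sym.
by rewrite sum_seq_pred1 ?undup_uniq ?mem_stages.
Qed.


Lemma surj_lab (d : nat) (f : nat -> nat) :
  (forall x, (x < d)%N -> (f x < d)%N) -> {in [pred x | (x < d)%N] &, injective f} ->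
  forall j, (j < d)%N -> exists2 x, (x < d)%N & f x = j.
Proof.
move=> fd finj j jd.
have u : uniq (map f (iota 0 d)).
  rewrite map_inj_in_uniq ?iota_uniq // => x y; rewrite !mem_iota !add0n /= => hx hy.
  by apply: finj.
have sub : {subset map f (iota 0 d) <= iota 0 d}.
  by move=> y /mapP [x]; rewrite !mem_iota !add0n /= => hx ->; apply: fd.
have [_ E] := uniq_min_size u sub (eq_leq (esym (size_map f _))).
have : j \in map f (iota 0 d) by rewrite E mem_iota.
by case/mapP => x; rewrite mem_iota add0n /= => hx ->; exists x.
Qed.

Lemma cntS k s :
  \sum_(l : paths T | st k l == s) (1 : R) = (hcount T k s * Pc T k)%:R.
Proof.
have := sum_prefix k (fun v => sstage T v == s) (fun _ => 1); rewrite /= => ->.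
rewrite big_seq_cond (eq_bigr (fun _ => (Pc T k)%:R)); last first.
  move=> v /andP [/nodesP [l0 ->] _].
  by rewrite sum1_card card_prefix.
by rewrite -big_seq_cond sum_const_seq natrM.
Qed.

Lemma cntE k (hk : (k < nlev T)%N) s j (hj : (j < dk T k)%N) :
  \sum_(l : paths T | (st k l == s) && (elab k l == j)) (1 : R) = (hcount T k s * Pc T k.+1)%:R.
Proof.
rewrite big_mkcondr /=.
have := sum_prefix k (fun v => sstage T v == s) (fun l => if elab k l == j then 1 else 0).
rewrite /= => ->.
rewrite big_seq_cond (eq_bigr (fun _ => (Pc T k.+1)%:R)); last first.
  move=> v /andP [/nodesP [l0 ->] _].
  have [_ H] := hwf; have [H1 H2] := H l0 k hk.
  have [x hx xj] := surj_lab H1 H2 hj.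
  rewrite -big_mkcondr /=.
  rewrite (eq_bigl (fun l => (Defs.prefix k l == Defs.prefix k l0) && (Defs.coord k l == x))).
    by rewrite sum1_card card_prefix_coord.
  move=> l /=; case: eqP => //= E.
  rewrite /elab E -xj (inj_in_eq H2) //.
  by rewrite inE coordE ltn_ord.
by rewrite -big_seq_cond sum_const_seq natrM.
Qed.

Variable alpha : R.
Local Notation w := (alpha / (#|paths T|%:R)).

Lemma adot_mass k (hk : (k < nlev T)%N) s (hs : s \in stages T k) :
  adot T alpha k s = w * (hcount T k s * Pc T k)%:R.
Proof.
elim: k hk s hs => [|k IH] hk s hs.
  have h0 : (0 < hcount T 0 s * Pc T 0)%N.
    by rewrite muln_gt0 hcount_gt0 // Pc_gt0 //; case: hwf.
  have [l0 E0] := stagesP hs.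
  have E : \sum_(l : paths T | st 0 l == s) (1:R) = #|paths T|%:R.
    rewrite sum1_card; congr (_%:R); apply: eq_card => l.
    by rewrite !inE E0 /Defs.prefix !take0 eqxx.
  rewrite -cntS E /= divfK //.
  by rewrite -E cntS pnatr_eq0 -lt0n.
have hk' : (k < nlev T)%N by apply: ltn_trans hk.
have dpos : (0 < dk T k)%N by case: hwf => H _; apply: H.
rewrite /= big_seq_cond (eq_bigr (fun _ => w * (Pc T k.+1)%:R)); last first.
  move=> v /andP [/nodesP [l ->] _].
  have -> : take k (Defs.prefix k.+1 l) = Defs.prefix k l by rewrite /Defs.prefix take_takel.
  have hpos := hcount_gt0 (mem_stages k l).
  rewrite IH ?mem_stages // (Pc_rec hk') !natrM.
  field.
  by rewrite !pnatr_eq0 -!lt0n dpos hpos paths_gt0.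
by rewrite -big_seq_cond sum_const_seq natrM mulrCA mulrA.
Qed.

Lemma aedge_mass k (hk : (k < nlev T)%N) s (hs : s \in stages T k) j (hj : (j < dk T k)%N) :
  aedge T alpha k s j = w * \sum_(l : paths T | (st k l == s) && (elab k l == j)) (1 : R).
Proof.
have dpos : (0 < dk T k)%N by case: hwf => H _; apply: H.
rewrite cntE // /aedge adot_mass // (Pc_rec hk) !natrM.
field.
by rewrite !pnatr_eq0 -!lt0n dpos paths_gt0.
Qed.


End Part2.
Section Gibbs.
Variable R : realType.

Lemma ln_le_sub1 (x : R) : 0 < x -> ln x <= x - 1.
Proof.
move=> x0; have := @le_ln1Dx R (x - 1).
have -> : 1 + (x - 1) = x by ring.
by apply; lra.
Qed.

Lemma ln_eq_sub1 (x : R) : 0 < x -> ln x = x - 1 -> x = 1.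
Proof.
move=> x0 E; apply/eqP; rewrite -[x == 1]negbK; apply/negP => nx.
have y0 : ln x != 0.
  apply/eqP => l0; move/eqP: nx; apply.
  by rewrite -(lnK (x := x)) ?posrE // l0 expR0.
have := expR_gt1Dx y0; rewrite lnK ?posrE // E.
lra.
Qed.

Lemma ln_prod (m : nat) (F : 'I_m -> R) :
  (forall i, 0 < F i) -> ln (\prod_(i < m) F i) = \sum_(i < m) ln (F i).
Proof.
elim: m F => [|m IH] F Fpos; first by rewrite !big_ord0 ln1.
rewrite big_ord_recr big_ord_recr /= lnM ?posrE ?prodr_gt0 // IH //.
Qed.

Lemma psum_seq_eq0 (I : eqType) (r : seq I) (F : I -> R) :
  (forall i, i \in r -> 0 <= F i) -> \sum_(i <- r) F i = 0 -> forall i, i \in r -> F i = 0.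
Proof.
elim: r => [|a r IH] Fge /= E i; first by rewrite in_nil.
have Fr : forall i, i \in r -> 0 <= F i by move=> j jr; apply: Fge; rewrite inE jr orbT.
move: E; rewrite big_cons => /eqP; rewrite paddr_eq0 ?Fge ?mem_head //; last first.
  by rewrite big_seq sumr_ge0.
move=> /andP [/eqP Fa /eqP Fs].
by rewrite inE => /predU1P [->|ir] //; apply: IH.
Qed.

Lemma gibbs (m : nat) (C th : 'I_m -> R) :
  (forall j, 0 < C j) -> (forall j, 0 < th j) -> \sum_j th j = 1 ->
  \sum_j C j * ln (th j) <= \sum_j C j * ln (C j / \sum_i C i) /\
  (\sum_j C j * ln (th j) = \sum_j C j * ln (C j / \sum_i C i) ->
   forall j, th j = C j / \sum_i C i).
Proof.
move=> Cpos thpos th1.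
set S := \sum_i C i.
have Spos : 0 < S.
  case: m C Cpos th thpos th1 @S => [|m] C Cpos th thpos th1 /=.
    by rewrite big_ord0 in th1; move/eqP: th1; rewrite eq_sym oner_eq0.
  by rewrite (bigD1 ord0) //= ltr_pwDl // sumr_ge0 // => i _; apply: ltW.
pose x j := th j * S / C j.
have xpos j : 0 < x j by rewrite /x divr_gt0 // mulr_gt0.
have thE j : th j = C j / S * x j.
  rewrite /x; field; apply/andP; split; [exact: lt0r_neq0 | exact: lt0r_neq0].
have lnE j : C j * ln (th j) = C j * ln (C j / S) + C j * ln (x j).
  by rewrite thE lnM ?posrE ?divr_gt0 ?mulr_gt0 // mulrDr.
pose D j := (th j * S - C j) - C j * ln (x j).
have Dge j : 0 <= D j.
  rewrite /D subr_ge0.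
  have : C j * ln (x j) <= C j * (x j - 1) by rewrite ler_pM2l // ln_le_sub1.
  by rewrite mulrBr mulr1 /x mulrCA divff ?mulr1 ?lt0r_neq0 // mulrC.
have sumD : \sum_j D j = - \sum_j C j * ln (x j).
  rewrite /D sumrB big_split /= sumrN -big_distrl /= th1 mul1r /S.
  by rewrite subrr sub0r.
have key : \sum_j C j * ln (th j) = \sum_j C j * ln (C j / S) - \sum_j D j.
  by rewrite sumD opprK -big_split /=; apply: eq_bigr => j _; rewrite lnE.
split.
  by rewrite key lerBlDr lerDl sumr_ge0.
move=> E j.
have : \sum_j D j = 0.
  by move/eqP: E; rewrite key -subr_eq0 addrAC subrr add0r oppr_eq0 => /eqP.
move/(psumr_eq0P (fun j _ => Dge j)) => /(_ j isT) /eqP.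
rewrite /D subr_eq0 => /eqP Dj.
have lx : ln (x j) = x j - 1.
  apply: (mulfI (lt0r_neq0 (Cpos j))).
  by rewrite -Dj mulrBr mulr1 /x mulrCA divff ?mulr1 ?lt0r_neq0 // mulrC.
by rewrite thE (ln_eq_sub1 (xpos j) lx) mulr1.
Qed.

End Gibbs.

Section MLE.
Variable R : realType.
Variable T : sstree.
Variable hwf : wf_sstree T.
Local Notation st k l := (sstage T (Defs.prefix k l)).

Definition Csb (c : paths T -> R) k s := \sum_(j < dk T k) Cs c k s j.

Definition thetah (c : paths T -> R) k s (j : nat) : R :=
  if s \in stages T k then Cs c k s j / Csb c k s else (dk T k)%:R^-1.

Definition mle (c : paths T -> R) (l : paths T) : R :=
  \prod_(k < nlev T) (Cs c k (st k l) (elab k l) / Csb c k (st k l)).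

Variable c : paths T -> R.
Variable cpos : forall l, 0 < c l.

Lemma Cs_ge0 k s j : 0 <= Cs c k s j.
Proof. by rewrite sumr_ge0 // => l _; apply: ltW. Qed.

Lemma Cs_gt0 k (hk : (k < nlev T)%N) s (hs : s \in stages T k) j (hj : (j < dk T k)%N) :
  0 < Cs c k s j.
Proof.
have := cntE R hwf hk s hj.
case: (pickP (fun l : paths T => (st k l == s) && (elab k l == j))) => [l1 hl1 | none] E.
  by rewrite /Cs (bigD1 l1) //= ltr_pwDl // sumr_ge0 // => l _; apply: ltW.
have : (hcount T k s * Pc T k.+1)%:R = (0 : R).
  by rewrite -E big_pred0.
move/eqP; rewrite pnatr_eq0 muln_eq0 => /orP [/eqP h0|/eqP p0].
  by move: (hcount_gt0 hs); rewrite h0.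
by move: (Pc_gt0 (proj1 hwf) k.+1); rewrite p0.
Qed.

Lemma dpos k (hk : (k < nlev T)%N) : (0 < dk T k)%N.
Proof. by case: hwf => H _; apply: H. Qed.

Lemma Csb_gt0 k (hk : (k < nlev T)%N) s (hs : s \in stages T k) : 0 < Csb c k s.
Proof.
rewrite /Csb (bigD1 (Ordinal (dpos hk))) //= ltr_pwDl ?Cs_gt0 ?dpos //.
by rewrite sumr_ge0 // => i _; apply: Cs_ge0.
Qed.

Lemma mle_model : model (mle c).
Proof.
exists (thetah c); split.
  move=> k s hk; split.
    move=> j hj; rewrite /thetah; case: ifP => hs.
      by rewrite divr_gt0 ?Cs_gt0 ?Csb_gt0.
    by rewrite invr_gt0 ltr0n dpos.
  rewrite /thetah; case hs: (s \in stages T k).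
    by rewrite -big_distrl /= divff // lt0r_neq0 // Csb_gt0.
  by rewrite sumr_const card_ord -[_ *+ _]mulr_natl divff // pnatr_eq0 -lt0n dpos.
by move=> l; apply: eq_bigr => k _; rewrite /thetah mem_stages.
Qed.

Lemma Lq (th : nat -> nat -> nat -> R) (q : paths T -> R) :
  (forall k s j, (k < nlev T)%N -> (j < dk T k)%N -> 0 < th k s j) ->
  (forall l, q l = \prod_(i < nlev T) th i (st i l) (elab i l)) ->
  \sum_l c l * ln (q l) =
  \sum_(k < nlev T) \sum_(s <- stages T k) \sum_(j < dk T k) Cs c k s j * ln (th k s j).
Proof.
move=> thpos qE.
rewrite (eq_bigr (fun l => \sum_(k < nlev T) c l * ln (th k (st k l) (elab k l)))); last first.
  move=> l _; rewrite qE ln_prod ?mulr_sumr // => i.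
  by apply: thpos => //; apply: elab_lt.
rewrite exchange_big /=; apply: eq_bigr => k _.
exact: (sum_stage_label hwf (ltn_ord k) c (fun s j => ln (th k s j))).
Qed.

Lemma mle_opt (q : paths T -> R) : model q ->
  \sum_l c l * ln (q l) <= \sum_l c l * ln (mle c l) /\
  (\sum_l c l * ln (q l) = \sum_l c l * ln (mle c l) -> forall l, q l = mle c l).
Proof.
case=> th [thP qE].
have thpos : forall k s j, (k < nlev T)%N -> (j < dk T k)%N -> 0 < th k s j.
  by move=> k s j hk hj; apply: (proj1 (thP k s hk)).
have [thh [thhP mE]] := mle_model.
have thhpos : forall k s j, (k < nlev T)%N -> (j < dk T k)%N -> 0 < thetah c k s j.
  move=> k s j hk hj; rewrite /thetah; case: ifP => hs.
    by rewrite divr_gt0 ?Cs_gt0 ?Csb_gt0.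
  by rewrite invr_gt0 ltr0n dpos.
have mE' : forall l, mle c l = \prod_(i < nlev T) thetah c i (st i l) (elab i l).
  by move=> l; apply: eq_bigr => k _; rewrite /thetah mem_stages.
rewrite (Lq thpos qE) (Lq thhpos mE').
have G : forall (k : 'I_(nlev T)) s, s \in stages T k ->
   \sum_(j < dk T k) Cs c k s j * ln (th k s j) <=
   \sum_(j < dk T k) Cs c k s j * ln (thetah c k s j) /\
   (\sum_(j < dk T k) Cs c k s j * ln (th k s j) =
    \sum_(j < dk T k) Cs c k s j * ln (thetah c k s j) ->
    forall j, (j < dk T k)%N -> th k s j = thetah c k s j).
  move=> k s hs.
  have := @gibbs R (dk T k) (fun j => Cs c k s j) (fun j => th k s j).
  case.
  - by move=> j; apply: Cs_gt0.
  - by move=> j; apply: thpos.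
  - by have [_ ->] := thP k s (ltn_ord k).
  move=> le eqth; rewrite /thetah hs; split => // E j hj.
  by have := eqth E (Ordinal hj).
split.
  apply: ler_sum => k _; rewrite big_seq [X in _ <= X]big_seq.
  by apply: ler_sum => s hs; apply: (proj1 (G k s hs)).
move=> E.
have D0 : forall (k : 'I_(nlev T)) s, s \in stages T k ->
   0 <= \sum_(j < dk T k) Cs c k s j * ln (thetah c k s j) -
        \sum_(j < dk T k) Cs c k s j * ln (th k s j).
  by move=> k s hs; rewrite subr_ge0; apply: (proj1 (G k s hs)).
have E2 : \sum_(k < nlev T) \sum_(s <- stages T k)
   ((\sum_(j < dk T k) Cs c k s j * ln (thetah c k s j)) -
    (\sum_(j < dk T k) Cs c k s j * ln (th k s j))) = 0.
  under eq_bigr => k _ do rewrite sumrB.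
  by rewrite sumrB E subrr.
have Hst : forall (k : 'I_(nlev T)) s, s \in stages T k -> forall j, (j < dk T k)%N ->
    th k s j = thetah c k s j.
  move=> k s hs.
  apply: (proj2 (G k s hs)); apply/eqP; rewrite eq_sym -subr_eq0; apply/eqP.
  have NN : forall k' : 'I_(nlev T), true -> 0 <= \sum_(s <- stages T k')
     (\sum_(j < dk T k') Cs c k' s j * ln (thetah c k' s j) -
      \sum_(j < dk T k') Cs c k' s j * ln (th k' s j)).
    by move=> k' _; rewrite big_seq sumr_ge0 // => s' hs'; apply: D0.
  have Hk := psumr_eq0P NN E2.
  by apply: (psum_seq_eq0 (D0 k) (Hk k isT) hs).
move=> l; rewrite qE mE'; apply: eq_bigr => k _.
by apply: Hst; rewrite ?mem_stages ?elab_lt.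
Qed.

End MLE.

Section Equiv.
Variable R : realType.

Lemma mle_equiv (T T' : sstree) (phi : paths T -> paths T') :
  wf_sstree T -> wf_sstree T' -> stat_equiv R phi ->
  forall (c : paths T -> R) (c' : paths T' -> R),
  (forall l, 0 < c l) -> (forall l, 0 < c' l) -> (forall l, c' (phi l) = c l) ->
  forall l, mle c l = mle c' (phi l).
Proof.
move=> hwf hwf' [bij H] c c' cpos c'pos hc.
have reidx : forall f : paths T' -> R,
    \sum_(l' : paths T') c' l' * ln (f l') = \sum_(l : paths T) c l * ln (f (phi l)).
  move=> f; rewrite (reindex phi) /=; last exact: onW_bij.
  by apply: eq_bigr => l _; rewrite hc.
have [r [hr pr]] := (H (mle c)).1 (mle_model hwf cpos).
have hp' : model (fun l => mle c' (phi l)).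
  by apply/(H _).2; exists (mle c'); split => //; exact: mle_model.
have [le1 _] := mle_opt hwf cpos hp'.
have [le2 eq2] := mle_opt hwf' c'pos hr.
have E1 : \sum_(l' : paths T') c' l' * ln (r l') = \sum_l c l * ln (mle c l).
  by rewrite reidx; apply: eq_bigr => l _; rewrite pr.
have E3 : \sum_(l' : paths T') c' l' * ln (mle c' l') = \sum_l c l * ln (mle c' (phi l)).
  exact: reidx.
have Eq : \sum_(l' : paths T') c' l' * ln (r l') = \sum_(l' : paths T') c' l' * ln (mle c' l').
  apply/eqP; rewrite eq_le le2 /= E1 E3 le1 //.
move=> l; rewrite pr; exact: eq2.
Qed.

End Equiv.

Section Score.
Variable R : realType.
Variable T : sstree.
Variable hwf : wf_sstree T.
Variable alpha : R.
Variable apos : 0 < alpha.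
Local Notation st k l := (sstage T (Defs.prefix k l)).
Local Notation w := (alpha / (#|paths T|%:R)).

Definition Fst (N : paths T -> nat) k s : R :=
  (gratio (\sum_(j < dk T k) aedge T alpha k s j) (\sum_(j < dk T k) ncount N k s j)%N)^-1 *
  \prod_(j < dk T k) gratio (aedge T alpha k s j) (ncount N k s j).

Lemma CS_BDeuE N : CS_BDeu N alpha = \prod_(k < nlev T) \prod_(s <- stages T k) Fst N k s.
Proof. by []. Qed.

Lemma gratio_gt0 (a : R) m : 0 < a -> 0 < gratio a m.
Proof. by move=> a0; rewrite /gratio prodr_gt0 // => i _; rewrite ltr_wpDr. Qed.

Lemma gratioS (a : R) m : gratio a m.+1 = gratio a m * (a + m%:R).
Proof. by rewrite /gratio big_ord_recr. Qed.

Lemma w_gt0 : 0 < w.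
Proof. by rewrite divr_gt0 // ltr0n paths_gt0. Qed.

Lemma aedge_gt0 k (hk : (k < nlev T)%N) s (hs : s \in stages T k) j (hj : (j < dk T k)%N) :
  0 < aedge T alpha k s j.
Proof.
rewrite (aedge_mass hwf) // (cntE R hwf) // mulr_gt0 ?w_gt0 // ltr0n muln_gt0.
by rewrite hcount_gt0 // Pc_gt0 //; case: hwf.
Qed.

Lemma abar_gt0 k (hk : (k < nlev T)%N) s (hs : s \in stages T k) :
  0 < \sum_(j < dk T k) aedge T alpha k s j.
Proof.
rewrite (bigD1 (Ordinal (dpos hwf hk))) //= ltr_pwDl ?aedge_gt0 ?dpos //.
by rewrite sumr_ge0 // => i _; apply: ltW; apply: aedge_gt0.
Qed.

Lemma Fst_eq N N1 k s : (forall j, ncount N1 k s j = ncount N k s j) -> Fst N1 k s = Fst N k s.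
Proof.
move=> H; rewrite /Fst (eq_bigr _ (fun (j : 'I_(dk T k)) _ => H j)); congr (_ * _).
by apply: eq_bigr => j _; rewrite H.
Qed.

Definition cN (N : paths T -> nat) (l : paths T) : R := w + (N l)%:R.

Lemma Cs_cN N k (hk : (k < nlev T)%N) s (hs : s \in stages T k) j (hj : (j < dk T k)%N) :
  Cs (cN N) k s j = aedge T alpha k s j + (ncount N k s j)%:R.
Proof.
rewrite /Cs /cN big_split /= (aedge_mass hwf) // mulr_sumr mulr1 /ncount natr_sum //.
Qed.

Lemma sum_ind_nat d j0 (hj0 : (j0 < d)%N) : (\sum_(j < d) (j0 == j))%N = 1%N.
Proof.
rewrite (bigD1 (Ordinal hj0)) //= eqxx big1 // => j /negbTE.
by rewrite -val_eqE /= eq_sym => ->.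
Qed.

Lemma Fst_step N N1 k (hk : (k < nlev T)%N) s0 (hs : s0 \in stages T k) j0 (hj0 : (j0 < dk T k)%N) :
  (forall j, ncount N1 k s0 j = (ncount N k s0 j + (j0 == j))%N) ->
  Fst N1 k s0 = Fst N k s0 * (Cs (cN N) k s0 j0 / Csb (cN N) k s0).
Proof.
move=> H.
have nb : (\sum_(j < dk T k) ncount N1 k s0 j)%N = (\sum_(j < dk T k) ncount N k s0 j).+1.
  by rewrite (eq_bigr _ (fun (j : 'I_(dk T k)) _ => H j)) big_split /= sum_ind_nat // addn1.
have pr : \prod_(j < dk T k) gratio (aedge T alpha k s0 j) (ncount N1 k s0 j) =
  \prod_(j < dk T k) gratio (aedge T alpha k s0 j) (ncount N k s0 j) *
  (aedge T alpha k s0 j0 + (ncount N k s0 j0)%:R).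
  rewrite (bigD1 (Ordinal hj0)) //= [in RHS](bigD1 (Ordinal hj0)) //= H eqxx addn1 gratioS.
  rewrite mulrAC; congr (_ * _ * _); apply: eq_bigr => j /negbTE.
  by rewrite -val_eqE /= eq_sym H => ->; rewrite addn0.
have Cb : Csb (cN N) k s0 = \sum_(j < dk T k) aedge T alpha k s0 j +
    (\sum_(j < dk T k) ncount N k s0 j)%:R.
  by rewrite /Csb natr_sum -big_split /=; apply: eq_bigr => j _; apply: Cs_cN.
rewrite /Fst nb gratioS pr Cs_cN // Cb.
have g0 := gratio_gt0 (\sum_(j < dk T k) ncount N k s0 j)%N (abar_gt0 hk hs).
have s0pos : 0 < \sum_(j < dk T k) aedge T alpha k s0 j + (\sum_(j < dk T k) ncount N k s0 j)%:R.
  by rewrite ltr_wpDr ?abar_gt0.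
rewrite invfM; field.
by rewrite !lt0r_neq0.
Qed.

Lemma ncount_step (N N1 : paths T -> nat) l0 k s j : (forall l, N1 l = (N l + (l == l0))%N) ->
  ncount N1 k s j = (ncount N k s j + ((st k l0 == s) && (elab k l0 == j)))%N.
Proof.
move=> H; rewrite /ncount (eq_bigr _ (fun l _ => H l)) big_split /=; congr addn.
case P0: ((st k l0 == s) && (elab k l0 == j)).
  rewrite (bigD1 l0) //= eqxx big1 ?addn0 // => l /andP [_ /negbTE ->] //.
rewrite big1 // => l Pl; case: eqP => // E; by rewrite -E Pl in P0.
Qed.

Lemma score_step (N N1 : paths T -> nat) l0 : (forall l, N1 l = (N l + (l == l0))%N) ->
  CS_BDeu N1 alpha = CS_BDeu N alpha * mle (cN N) l0.
Proof.
move=> H; rewrite !CS_BDeuE /mle -big_split /=; apply: eq_bigr => k _.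
have hk := ltn_ord k.
have hs : st k l0 \in stages T k := mem_stages k l0.
rewrite (bigD1_seq (st k l0)) ?undup_uniq //= [in RHS](bigD1_seq (st k l0)) ?undup_uniq //=.
rewrite (@Fst_step N N1 k hk _ hs _ (elab_lt hwf hk l0)); last first.
  by move=> j; rewrite (ncount_step _ _ _ H) eqxx.
rewrite mulrAC; congr (_ * _ * _).
apply: eq_bigr => s ns0; apply: Fst_eq => j.
by rewrite (ncount_step _ _ _ H) eq_sym (negbTE ns0) addn0.
Qed.

Lemma score_zero (N : paths T -> nat) : (forall l, N l = 0%N) -> CS_BDeu N alpha = 1.
Proof.
move=> z; rewrite CS_BDeuE big1 // => k _; rewrite big1_seq // => s _.
have zc : forall j, ncount N k s j = 0%N by move=> j; rewrite /ncount big1.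
rewrite /Fst.
have -> : (\sum_(j < dk T k) ncount N k s j)%N = 0%N by rewrite big1 // => j _; apply: zc.
rewrite {1}/gratio big_ord0 invr1 mul1r big1 // => j _.
by rewrite zc /gratio big_ord0.
Qed.

End Score.

Theorem mainTheorem6 (R : realType) (T T' : sstree)
    (phi : paths T -> paths T') (alpha : R)
    (N : paths T -> nat) (N' : paths T' -> nat) :
  wf_sstree T -> wf_sstree T' ->
  stat_equiv R phi ->
  0 < alpha ->
  (forall l, N' (phi l) = N l) ->
  CS_BDeu N alpha = CS_BDeu N' alpha.
Proof.
move=> hwf hwf' heq apos hN.
have bij := heq.1.
suff : forall m (N : paths T -> nat) (N' : paths T' -> nat),
    (forall l, N' (phi l) = N l) -> (\sum_l N l)%N = m -> CS_BDeu N alpha = CS_BDeu N' alpha.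
  by move=> /(_ _ N N' hN erefl).
elim=> [|m IH] {N N' hN} N N' hN hs.
  have z : forall l, N l = 0%N.
    by move=> l; move/eqP: hs; rewrite sum_nat_eq0 => /forallP /(_ l) /eqP.
  have [g phig gphi] := bij.
  have z' : forall l', N' l' = 0%N by move=> l'; rewrite -(gphi l') hN z.
  by rewrite (score_zero alpha z) (score_zero alpha z').
have [l0 hl0|none] := pickP (fun l => 0 < N l)%N; last first.
  by move: hs; rewrite big1 // => l _; have := none l; rewrite lt0n => /negbFE/eqP.
pose N0 := fun l => (N l - (l == l0))%N.
pose N0' := fun l' => (N' l' - (l' == phi l0))%N.
have hN0 : forall l, N0' (phi l) = N0 l by move=> l; rewrite /N0 /N0' hN (bij_eq bij).
have hNs : forall l, N l = (N0 l + (l == l0))%N.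
  move=> l; rewrite /N0; case: eqP => [->|_]; last by rewrite subn0 addn0.
  by rewrite subn1 addn1 prednK.
have hNs' : forall l', N' l' = (N0' l' + (l' == phi l0))%N.
  move=> l'; rewrite /N0'; case: eqP => [->|_]; last by rewrite subn0 addn0.
  by rewrite subn1 addn1 prednK // hN.
have hs0 : (\sum_l N0 l)%N = m.
  have s1 : (\sum_(l : paths T) (l == l0))%N = 1%N.
    rewrite (bigD1 l0) //= eqxx big1 ?addn0 //.
    by move=> l /negbTE ->.
  by move: hs; rewrite (eq_bigr _ (fun l _ => hNs l)) big_split /= s1 addn1 => [[]].
rewrite (score_step hwf apos hNs) (score_step hwf' apos hNs') (IH N0 N0' hN0 hs0).
congr (_ * _).
apply: (mle_equiv hwf hwf' heq).
- by move=> l; rewrite /cN ltr_wpDr ?(w_gt0 hwf apos) ?(w_gt0 hwf' apos).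
- by move=> l; rewrite /cN ltr_wpDr ?(w_gt0 hwf apos) ?(w_gt0 hwf' apos).
- by move=> l; rewrite /cN hN0 (bij_eq_card bij).
Qed.
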